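(* Under the Gaussian copula model, for any $m\in\mathbb N$, $\alpha\in(0,1]$, $\rho\in(0,1]$ and $\delta\in(0,1]$, there exists $\bar n=\bar n(\alpha,\rho,\delta)<\infty$ such that $$p^{\mathrm{G}}_{\mathrm{success}}(n,m,\alpha,\rho)\ge1-\delta\quad\text{for all } n\ge\bar n.$$
   Context: Ordinal optimisation model: let $(Z_1,X_1),\dots,(Z_n,X_n)$ be i.i.d. copies of a pair $(Z,X)$ of real random variables. Order $Z_1,\dots,Z_n$ increasingly as $Z_{1:n}\le\dots\le Z_{n:n}$ and let $X_{\langle i\rangle}$ denote the $X$-value paired with $Z_{i:n}$. Let $x^*_\alpha$ be the $\alpha$-quantile of $X$. The success probability is $\Pr(\min_{1\le i\le m}X_{\langle i\rangle}\le x^*_\alpha)$. Gaussian copula model with correlation $\rho$: $Z,X$ have continuous marginal CDFs $F_Z,F_X$ and joint CDF $\boldsymbol\Phi_{\rho}(\Phi^{-1}(F_Z(z)),\Phi^{-1}(F_X(x)))$, with $\Phi$ the standard normal CDF and $\boldsymbol\Phi_\rho$ the standard bivariate normal CDF with correlation $\rho$. The success probability in this model is $p^{\mathrm{G}}_{\mathrm{success}}(n,m,\alpha,\rho)$ (defined for $n\ge m$). *)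

(* Defs.v *)
From HB Require Import structures.
From mathcomp Require Import all_boot all_order all_algebra.
From mathcomp Require Import all_classical all_reals all_analysis.
Set Implicit Arguments. Unset Strict Implicit. Unset Printing Implicit Defensive.
Import Order.TTheory GRing.Theory Num.Def Num.Theory.
Import numFieldNormedType.Exports.
Local Open Scope classical_set_scope.
Local Open Scope ring_scope.

Section defs.
Context {R : realType}.

Definition Phi (x : R) : R := fine (normal_prob 0 1 `]-oo, x]).

(* Standard bivariate normal with correlation rho, realised as
   (U, rho U + sqrt(1-rho^2) W) with U, W independent N(0,1).
   Gaussian copula: C_rho(u,v) = Phi2_rho(Phi^{-1}(u), Phi^{-1}(v))
   = P(Phi(U) <= u, Phi(V) <= v), u, v in [0,1]. *)
Definition gauss_copula (rho u v : R) : R :=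
  fine ((normal_prob 0 1 \x normal_prob 0 1)%E
    [set p : R * R | Phi p.1 <= u /\
                     Phi (rho * p.1 + Num.sqrt (1 - rho ^+ 2) * p.2) <= v]).

Definition cdf d (T : measurableType d) (P : probability T R) (Y : T -> R)
  (y : R) : R := fine (P (Y @^-1` `]-oo, y])).

Definition quantile (F : R -> R) (alpha : R) : \bar R :=
  ereal_inf [set (x%:E) | x in [set x : R | alpha <= F x]].

(* indices 0..n-1 listed in increasing order of Z (stable sort):
   the i-th entry is the index of Z_{i+1:n} *)
Definition z_order n d (T : measurableType d) (Z : 'I_n -> T -> R) (w : T)
  : seq 'I_n := sort (fun i j => Z i w <= Z j w) (enum 'I_n).

Definition success_event n d (T : measurableType d) (Z X : 'I_n -> T -> R)
  (m : nat) (xstar : \bar R) : set T :=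
  [set w | has (fun i => ((X i w)%:E <= xstar)%E) (take m (z_order Z w))].

Definition pairs_independent n d (T : measurableType d) (P : probability T R)
  (Z X : 'I_n -> T -> R) : Prop :=
  forall A B : 'I_n -> set R, (forall i, measurable (A i)) ->
    (forall i, measurable (B i)) ->
    P (\bigcap_(i in [set: 'I_n]) (Z i @^-1` A i `&` X i @^-1` B i)) =
    (\prod_(i < n) P (Z i @^-1` A i `&` X i @^-1` B i))%E.

Definition gauss_copula_sample n d (T : measurableType d) (P : probability T R)
  (rho : R) (FZ FX : R -> R) (Z X : 'I_n -> T -> R) : Prop :=
  (forall i, measurable_fun setT (Z i)) /\
  (forall i, measurable_fun setT (X i)) /\
  continuous FZ /\ continuous FX /\
  (forall i z, cdf P (Z i) z = FZ z) /\
  (forall i x, cdf P (X i) x = FX x) /\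
  (forall i z x, fine (P (Z i @^-1` `]-oo, z] `&` X i @^-1` `]-oo, x])) =
                 gauss_copula rho (FZ z) (FX x)) /\
  pairs_independent P Z X.

End defs.

(* Main.v *)
Require Import Defs.
From HB Require Import structures.
From mathcomp Require Import all_boot all_order all_algebra.
From mathcomp Require Import all_classical all_reals all_analysis.
From mathcomp Require Import ring lra.
From mathcomp Require Import measurable_realfun.
Import Order.TTheory GRing.Theory Num.Def Num.Theory.
Import numFieldNormedType.Exports.
Local Open Scope classical_set_scope.
Local Open Scope ring_scope.

Lemma lip1_continuous {R : realType} (f : R -> R) :
  (forall x y, `|f x - f y| <= `|x - y|) -> continuous f.
Proof.
move=> H x; apply/cvgrPdist_lt => e e0.
near=> y; apply: le_lt_trans (H _ _) _.
near: y; apply: cvgr_dist_lt => //; exact: cvg_id.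
Unshelve. all: by end_near.
Qed.

Section gen.
Context {R : realType} d (T : measurableType d) (P : probability T R).

Lemma gcdf_lim (f : T -> R) : measurable_fun setT f ->
  ((fun y => fine (P (f @^-1` `]-oo, y]))) @ -oo --> (0:R)) /\
  ((fun y => fine (P (f @^-1` `]-oo, y]))) @ +oo --> (1:R)).
Proof.
move=> mf.
have Pf : f \in (@mfun _ _ T (measurableTypeR R)) by exact: mem_set.
pose X : {RV P >-> R} := mfun_Sub Pf.
split.
- have := @cvg_cdfNy0 _ _ _ P X.
  move/fine_cvg. exact.
- have := @cvg_cdfy1 _ _ _ P X.
  move/fine_cvg. exact.
Qed.
End gen.

Section phi.
Context {R : realType}.
Local Notation N := (normal_prob (0:R) 1).

Lemma N_itv_oc (x y : R) : x <= y ->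
  N `]x, y] = (\int[lebesgue_measure]_(t in `]x, y]) (normal_pdf 0 1 t)%:E)%E.
Proof. by []. Qed.

Lemma pdf_le1 (t : R) : normal_pdf 0 1 t <= 1.
Proof.
apply: le_trans (normal_pdf_ub _ _ _) _; first exact: oner_neq0.
have hp : 1 <= (1:R) ^+ 2 * pi *+ 2.
  by rewrite expr2 mulr1 mul1r mulr2n; have := pi_ge2 R; lra.
rewrite /normal_peak invr_le1 ?unitfE ?sqrtr_eq0 -?ltNge ?sqrtr_gt0 //; try lra.
all: try lra.
by rewrite -[leLHS]sqrtr1; apply: ler_wsqrtr.
Qed.
End phi.

Section phi2.
Context {R : realType}.
Local Notation N := (normal_prob (0:R) 1).
Local Notation Phi := (@Phi R).
Local Open Scope ereal_scope.

Lemma N_fin (A : set R) : measurable A -> N A \is a fin_num.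
Proof. by move=> mA; rewrite fin_num_measure. Qed.

Lemma N_le1 (A : set R) : measurable A -> N A <= 1.
Proof. by move=> mA; rewrite probability_le1. Qed.

Lemma N_itv_le (x y : R) : (x <= y)%R -> N `]x, y] <= (y - x)%:E.
Proof.
move=> xy.
apply: (@le_trans _ _ (\int[lebesgue_measure]_(t in `]x, y]) (cst 1%R t)%:E)).
  apply: ge0_le_integral => //=.
  - by move=> t _; rewrite lee_fin normal_pdf_ge0.
  - apply/measurable_EFinP; apply: measurable_funTS; exact: measurable_normal_pdf.
  - by move=> t _; rewrite lee_fin pdf_le1.
rewrite (_ : (fun t => (cst 1%R t)%:E) = cst 1) // integral_cst //= lebesgue_measure_itv /= lte_fin.
case: ltP => h; first by rewrite mul1e.
by rewrite mul1e lee_fin; lra.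
Qed.
End phi2.
Section phi3.
Context {R : realType}.
Local Notation N := (normal_prob (0:R) 1).
Local Open Scope ereal_scope.

Lemma N_itv_gt0 (x y : R) : (x < y)%R -> 0 < N `]x, y].
Proof.
move=> xy.
pose c : R := (normal_peak (1:R) * expR (- (x ^+ 2 + y ^+ 2)))%R.
have c0 : (0 < c)%R by rewrite mulr_gt0 ?expR_gt0 // normal_peak_gt0 // oner_neq0.
apply: (@lt_le_trans _ _ (\int[lebesgue_measure]_(t in `]x, y]) (cst c t)%:E)).
  rewrite (_ : (fun t => (cst c t)%:E) = cst c%:E) // integral_cst //=.
  rewrite lebesgue_measure_itv /= lte_fin xy /= -EFinD -EFinM lte_fin.
  by rewrite mulr_gt0 // subr_gt0.
apply: ge0_le_integral => //=.
- by move=> t _; rewrite lee_fin ltW.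
- apply/measurable_EFinP; apply: measurable_funTS; exact: measurable_normal_pdf.
- move=> t; rewrite in_itv /= => /andP[xt ty].
  rewrite lee_fin normal_pdfE ?oner_neq0 // /c.
  rewrite /normal_fun ler_pM2l ?normal_peak_gt0 ?oner_neq0 // ler_expR.
  rewrite subr0 mulNr lerN2.
  have e : ((1:R) ^+ 2 *+ 2 = 2)%R by rewrite expr2 mulr1.
  rewrite e.
  have h1 : (t ^+ 2 <= x ^+ 2 + y ^+ 2)%R.
    rewrite !expr2; have [t0|t0] := leP 0%R t; nra.
  have h2 : (0 <= t ^+ 2)%R by exact: sqr_ge0.
  rewrite ler_pdivrMr; last by lra.
  nra.
Qed.
End phi3.
Section phi4.
Context {R : realType}.
Local Notation N := (normal_prob (0:R) 1).
Local Notation Phi := (@Phi R).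

Lemma N_split (x y : R) : x <= y ->
  N `]-oo, y] = (N `]-oo, x] + N `]x, y])%E.
Proof.
move=> xy.
rewrite (@itv_bndbnd_setU _ _ _ (BRight x)) //.
rewrite measureU //.
rewrite -subset0 => t [] /=; rewrite !in_itv /= => tx /andP[xt _]; lra.
Qed.

Lemma Phi_diff (x y : R) : x <= y -> Phi y - Phi x = fine (N `]x, y]).
Proof.
move=> xy; rewrite /Defs.Phi (N_split _ _ xy) fineD ?N_fin //.
by rewrite addrC addKr.
Qed.

Lemma Phi_ge0 x : 0 <= Phi x.
Proof. by rewrite /Defs.Phi fine_ge0. Qed.

Lemma Phi_le1 x : Phi x <= 1.
Proof.
rewrite /Defs.Phi -lee_fin fineK ?N_fin //; exact: N_le1.
Qed.

Lemma Phi_lt (x y : R) : x < y -> Phi x < Phi y.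
Proof.
move=> xy; rewrite -subr_gt0 Phi_diff ?ltW // fine_gt0 // N_itv_gt0 //=.
by rewrite (le_lt_trans (N_le1 _ _)) // ltry.
Qed.

Lemma Phi_le (x y : R) : x <= y -> Phi x <= Phi y.
Proof. by rewrite le_eqVlt => /predU1P[->//|/Phi_lt/ltW]. Qed.

Lemma Phi_lip x y : `|Phi x - Phi y| <= `|x - y|.
Proof.
wlog xy : x y / x <= y.
  move=> H; have [/H//|/ltW/H] := leP x y.
  by rewrite distrC [`|x - y|]distrC.
rewrite distrC [`|x - y|]distrC Phi_diff // !ger0_norm ?subr_ge0 //.
  by rewrite -lee_fin fineK ?N_fin // N_itv_le.
by rewrite fine_ge0.
Qed.

Lemma Phi_cont : continuous Phi.
Proof. exact: lip1_continuous Phi_lip. Qed.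

Lemma Phi_lims : (Phi @ -oo --> (0:R)) /\ (Phi @ +oo --> (1:R)).
Proof.
have := @gcdf_lim R _ _ N idfun (@measurable_id _ _ setT).
by [].
Qed.
End phi4.
Section cop.
Context {R : realType}.
Local Notation N := (normal_prob (0:R) 1).
Local Notation Phi := (@Phi R).
Local Open Scope ereal_scope.

Lemma Phi_meas : measurable_fun setT Phi.
Proof. exact: continuous_measurable_fun Phi_cont. Qed.

Lemma N_ray_c (c : R) : fine (N `]c, +oo[) = (1 - Phi c)%R.
Proof.
rewrite -setCitvl probability_setC // fineB ?N_fin //.
Qed.

Lemma copula_tail (rho a b v : R) : (0 < rho <= 1)%R -> (0 <= b - rho * a)%R ->
  (Phi b <= v)%R ->
  (Phi a - gauss_copula rho (Phi a) v <= Phi a * (1 - Phi (b - rho * a)))%R.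
Proof.
move=> /andP[r0 r1] c0 bv.
set s := Num.sqrt (1 - rho ^+ 2).
have s0 : (0 <= s)%R by exact: sqrtr_ge0.
have s1 : (s <= 1)%R.
  rewrite /s -[leRHS]sqrtr1; apply: ler_wsqrtr.
  have : (0 <= rho ^+ 2)%R by exact: sqr_ge0. lra.
set S := [set p : R * R | (Phi p.1 <= Phi a)%R /\ (Phi (rho * p.1 + s * p.2) <= v)%R].
have mV : measurable_fun setT (fun p : R * R => Phi (rho * p.1 + s * p.2)).
  exact: (measurableT_comp Phi_meas (measurable_funD
     (measurable_funM (measurable_cst _) measurable_fst)
     (measurable_funM (measurable_cst _) measurable_snd))).
have mS : measurable S.
  rewrite /S (_ : [set p | _ /\ _] = (Phi \o fst) @^-1` `]-oo, Phi a] `&`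
     (fun p : R * R => Phi (rho * p.1 + s * p.2)) @^-1` `]-oo, v]).
    apply: measurableI.
      rewrite -[X in measurable X]setTI.
      by apply: (measurableT_comp Phi_meas measurable_fst).
    by rewrite -[X in measurable X]setTI; apply: mV.
  by apply/seteqP; split => p /=; rewrite !in_itv /=.
pose Rc := (`]-oo, a] `*` [set: R]) : set (R * R).
pose c := (b - rho * a)%R.
have mR : measurable Rc by apply: measurableX.
have SR : S `<=` Rc.
  move=> p [h1 _]; split => //=; rewrite in_itv /= leNgt.
  by apply/negP => /Phi_lt; rewrite ltNge h1.
have muR : (N \x N) Rc = N `]-oo, a].
  rewrite product_measure1E // [X in _ * X](_ : _ = 1) ?mule1 //; exact: probability_setT.
have mRS : measurable (Rc `\` S) by apply: measurableD.
have inc : Rc `\` S `<=` `]-oo, a] `*` `]c, +oo[.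
  move=> p [[/= pa _]] nS; split => //=.
  move: pa; rewrite !in_itv /= andbT => pa.
  have hv : (v < Phi (rho * p.1 + s * p.2))%R.
    rewrite ltNge; apply/negP => hv; apply: nS; split => //.
    exact: Phi_le.
  have hb : (b < rho * p.1 + s * p.2)%R.
    rewrite ltNge; apply/negP => /Phi_le h.
    by move: hv; rewrite ltNge (le_trans h bv).
  have hra : (rho * p.1 <= rho * a)%R by rewrite ler_pM2l.
  rewrite /c.
  have h2 : (b - rho * a < s * p.2)%R by lra.
  have p0 : (0 < p.2)%R.
    rewrite ltNge; apply/negP => p0.
    have : (s * p.2 <= 0)%R by rewrite mulr_ge0_le0.
    lra.
  have : (s * p.2 <= p.2)%R by rewrite ger_pMl.
  lra.
have bnd : (N \x N) (Rc `\` S) <= N `]-oo, a] * N `]c, +oo[.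
  rewrite -product_measure1E //; apply: le_measure => //; rewrite inE //.
  exact: measurableX.
have dec : (N \x N) Rc = (N \x N) (Rc `\` S) + (N \x N) S.
  by rewrite (measureDI (N \x N) mR mS) (setIidr SR).
have finsub : forall A, measurable A -> A `<=` Rc -> (N \x N) A \is a fin_num.
  move=> A mA AR; rewrite ge0_fin_numE ?measure_ge0 //.
  apply: (@le_lt_trans _ _ ((N \x N) Rc)); first by apply: le_measure; rewrite ?inE.
  by rewrite muR (le_lt_trans (N_le1 _ _)) // ltry.
have finRS : (N \x N) (Rc `\` S) \is a fin_num by apply: finsub => // p [].
have finS : (N \x N) S \is a fin_num by apply: finsub.
rewrite /gauss_copula -/s -/S.
have hPa : Phi a = fine ((N \x N) Rc) by rewrite muR.
rewrite {1}hPa dec fineD // addrK -N_ray_c /Defs.Phi.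
by rewrite -fineM ?N_fin // fine_le // ?fin_numM ?N_fin.
Qed.
End cop.
Lemma quantile_prop {R : realType} (F : R -> R) (alpha : R) : continuous F ->
  {homo F : x y / x <= y} -> (exists y, F y < alpha) ->
  quantile F alpha = +oo%E \/
  (exists r, quantile F alpha = r%:E /\ alpha <= F r).
Proof.
move=> cF mF [y0 Fy0].
set Q := [set x : R | alpha <= F x].
have [[x1 Qx1]|nQ0] := pselect (exists x, Q x); last first.
  have Q0 : Q = set0 by apply/seteqP; split => // x Qx; apply: nQ0; exists x.
  by left; rewrite /quantile -/Q Q0 image_set0 ereal_inf0.
have lbQ : lbound Q y0.
  move=> x Qx; rewrite leNgt; apply/negP => xy.
  by have := mF _ _ (ltW xy); rewrite /Q /= in Qx; lra.
have hQ : has_lbound Q by exists y0.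
have nQ : Q !=set0 by exists x1.
right; exists (inf Q); split; first by rewrite /quantile -/Q ereal_inf_EFin.
rewrite leNgt; apply/negP => Fr.
have /cvgrPdist_lt /(_ (alpha - F (inf Q))) : F x @[x --> inf Q] --> F (inf Q).
  exact: cF.
rewrite subr_gt0 => /(_ Fr) /nbhs_ballP [e /= e0 He].
have [x Qx xe] := @inf_adherent R Q e e0 (conj nQ hQ).
have le := ge_inf hQ Qx.
have : ball (inf Q) e x.
  by rewrite /ball /= distrC ger0_norm ?subr_ge0 //; lra.
move/He => /=; rewrite /Q /= in Qx.
move: (mF _ _ le) => h.
rewrite distrC ger0_norm ?subr_ge0 //; lra.
Qed.
Section comb.
Context {R : realType} (n : nat) d (T : measurableType d) (Z X : 'I_n -> T -> R).

Definition sortb (b : {ffun 'I_n * 'I_n -> bool}) : seq 'I_n :=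
  sort (fun i j => b (i, j)) (enum 'I_n).

Definition cmp (w : T) : {ffun 'I_n * 'I_n -> bool} :=
  [ffun p => Z p.1 w <= Z p.2 w].

Lemma z_order_cmp w : z_order Z w = sortb (cmp w).
Proof.
rewrite /z_order /sortb; congr sort.
by apply/funext => i; apply/funext => j; rewrite ffunE.
Qed.

Lemma success_of (m : nat) (xs : \bar R) (z0 : R) w : (0 < m)%N ->
  (exists j, Z j w <= z0) ->
  (forall i, Z i w <= z0 -> ((X i w)%:E <= xs)%E) ->
  success_event Z X m xs w.
Proof.
move=> m0 [j Zj] H; rewrite /success_event /= /z_order.
set r := (fun i j : 'I_n => Z i w <= Z j w).
have tr : transitive r by move=> a b c; exact: le_trans.
have tot : total r by move=> a b; exact: le_total.
have js : j \in sort r (enum 'I_n) by rewrite mem_sort mem_enum.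
have := sort_sorted tot (enum 'I_n).
case E : (sort r (enum 'I_n)) js => [//|h t] js /= Hp.
have hmin : Z h w <= Z j w.
  move: js; rewrite inE => /predU1P[->//|jt].
  by have := order_path_min tr Hp => /allP /(_ _ jt).
case: m m0 => // m _ /=.
by rewrite H //; apply: le_trans hmin Zj.
Qed.

Lemma success_meas (m : nat) (xs : \bar R) :
  (forall i, measurable_fun setT (Z i)) -> (forall i, measurable_fun setT (X i)) ->
  measurable (success_event Z X m xs).
Proof.
move=> mZ mX.
have mXi : forall i, measurable [set w | ((X i w)%:E <= xs)%E].
  move=> i; rewrite -[X in measurable X]setTI.
  apply: (@measurable_lee _ _ _ setT) => //.
  exact/measurable_EFinP.
have mfib : forall b, measurable [set w | cmp w = b].
  move=> b.
  rewrite (_ : [set w | cmp w = b] = \bigcap_(p in [set: 'I_n * 'I_n])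
     [set w | (Z p.1 w <= Z p.2 w) = b p]).
    apply: fin_bigcap_measurable; first exact: finite_finset.
    move=> p _; rewrite -[X in measurable X]setTI.
    have := measurable_fun_ler (mZ p.1) (mZ p.2) measurableT.
    by move=> /(_ [set b p]) h; apply: h.
  apply/seteqP; split => w /=.
    by move=> <- p _; rewrite ffunE.
  move=> H; apply/ffunP => p; rewrite ffunE; exact: H.
rewrite (_ : success_event Z X m xs = \bigcup_(b in [set: {ffun 'I_n * 'I_n -> bool}])
    ([set w | cmp w = b] `&`
     \big[setU/set0]_(i <- take m (sortb b)) [set w | ((X i w)%:E <= xs)%E])).
  apply: fin_bigcup_measurable; first exact: finite_finset.
  move=> b _; apply: measurableI => //.
  by apply: bigsetU_measurable.
apply/seteqP; split => w /=.
  rewrite /success_event /= z_order_cmp => H.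
  exists (cmp w) => //; split => //.
  move: H; elim: (take m (sortb (cmp w))) => [//|i s IH] /=.
  rewrite big_cons => /orP[h|/IH h]; [by left | by right].
move=> [b _ [<-]]; rewrite /success_event /= z_order_cmp.
elim: (take m (sortb (cmp w))) => [|i s IH] /=; first by rewrite big_nil.
by rewrite big_cons => -[->//|/IH ->]; rewrite orbT.
Qed.
End comb.

Section helpers.
Context {R : realType}.

Lemma ninfty_all (Pr : R -> Prop) :
  (\forall x \near -oo, Pr x) -> exists M, forall x, x <= M -> Pr x.
Proof.
case=> M [_ H]; exists (M - 1) => x xM; apply: H; lra.
Qed.

Lemma pinfty_all (Pr : R -> Prop) :
  (\forall x \near +oo, Pr x) -> exists M, forall x, M <= x -> Pr x.
Proof.
case=> M [_ H]; exists (M + 1) => x xM; apply: H; lra.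
Qed.

Lemma bernoulli_ub (u : R) (k : nat) : 0 <= u <= 1 ->
  (1 - u) ^+ k * (1 + k%:R * u) <= 1.
Proof.
move=> /andP[u0 u1]; elim: k => [|k IH]; first by rewrite expr0 mul0r addr0 mul1r.
rewrite exprS -[k.+1]addn1 natrD.
set q := (1 - u) ^+ k in IH *.
have h0 : 0 <= q by rewrite /q exprn_ge0 // subr_ge0.
have hk : 0 <= k%:R :> R by exact: ler0n.
have h2 : 0 <= q * ((k%:R + 1) * (u * u)).
  by rewrite mulr_ge0 // mulr_ge0 // ?mulr_ge0 //; lra.
have e : (1 - u) * q * (1 + (k%:R + 1%:R) * u) =
   q * (1 + k%:R * u) - q * ((k%:R + 1) * (u * u)) by ring.
rewrite e; lra.
Qed.
End helpers.

Section probh.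
Context {R : realType} d (T : measurableType d) (P : probability T R).
Local Open Scope ereal_scope.

Lemma union_bound (I : Type) (s : seq I) (F : I -> set T) :
  (forall i, measurable (F i)) ->
  P (\big[setU/set0]_(i <- s) F i) <= \sum_(i <- s) P (F i).
Proof.
move=> mF; elim: s => [|i s IH]; first by rewrite !big_nil measure0.
rewrite !big_cons; apply: le_trans (measureU2 _ _ _) _ => //.
  exact: bigsetU_measurable.
exact: leeD.
Qed.

Lemma cdf_mono (Y : T -> R) : measurable_fun setT Y ->
  {homo (fun y => fine (P (Y @^-1` `]-oo, y]))) : x y / (x <= y)%R}.
Proof.
move=> mY x y xy; rewrite fine_le ?fin_num_measure //.
  by rewrite -[X in measurable X]setTI; apply: mY.
  by rewrite -[X in measurable X]setTI; apply: mY.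
apply: le_measure; rewrite ?inE.
- by rewrite -[X in measurable X]setTI; apply: mY.
- by rewrite -[X in measurable X]setTI; apply: mY.
move=> w /=; rewrite !in_itv /= => h; exact: le_trans h xy.
Qed.
End probh.

Theorem mainTheorem9 (R : realType) (alpha rho delta : R) :
  0 < alpha <= 1 -> 0 < rho <= 1 -> 0 < delta <= 1 ->
  exists nbar : nat, forall m n : nat, (1 <= m <= n)%N -> (nbar <= n)%N ->
  forall (d : measure_display) (T : measurableType d) (P : probability T R)
    (FZ FX : R -> R) (Z X : 'I_n -> T -> R),
  gauss_copula_sample P rho FZ FX Z X ->
  ((1 - delta)%:E <= P (success_event Z X m (quantile FX alpha)))%E.
Proof.
move=> /andP[a0 a1] /andP[r0 r1] /andP[d0 d1].
have [PhiN PhiP] := @Phi_lims R.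
have [b hb] : exists b, Phi b <= alpha.
  have /cvgrPdist_lt /(_ alpha a0) /ninfty_all [M HM] := PhiN.
  exists M; have := HM M (lexx _); rewrite sub0r normrN ger0_norm ?Phi_ge0 //.
  exact: ltW.
pose c : R := 2 / delta.
have c0 : 0 < c by rewrite divr_gt0.
pose eps : R := delta ^+ 2 / 4.
have eps0 : 0 < eps by rewrite divr_gt0 // exprn_gt0.
have [K HK] : exists K, 0 <= K /\ forall y, K <= y -> 1 - Phi y <= eps.
  have /cvgrPdist_lt /(_ eps eps0) /pinfty_all [M HM] := PhiP.
  exists (maxr M 0); split; first by rewrite le_max lexx orbT.
  move=> y; rewrite ge_max => /andP[My _].
  by have := HM y My; rewrite ger0_norm ?subr_ge0 ?Phi_le1 // => /ltW.
pose A := (b - K) / rho.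
have hA : forall a, a <= A -> K <= b - rho * a.
  move=> a; rewrite /A ler_pdivlMr // => h.
  have : a * rho = rho * a by rewrite mulrC. lra.
pose PA := Phi A.
have PA0 : 0 < PA.
  apply: (le_lt_trans (Phi_ge0 (A - 1))); apply: Phi_lt; lra.
pose N0 := (truncn (c / PA + c)).+1.
exists N0 => m n /andP[m1 mn] nN0 d T P FZ FX Z X.
move=> [mZ [mX [cZ [cX [cdfZ [cdfX [joint indep]]]]]]].
have n0 : (0 < n)%N := leq_trans m1 mn.
pose i0 : 'I_n := Ordinal n0.
have n0R : 0 < n%:R :> R by rewrite ltr0n.
have nR : c / PA + c < n%:R.
  apply: lt_le_trans (truncnS_gt _) _; rewrite ler_nat; exact: nN0.
have cPA0 : 0 < c / PA by rewrite divr_gt0.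
pose u := c / n%:R.
have u0 : 0 < u by rewrite divr_gt0.
have u1 : u < 1 by rewrite ltr_pdivrMr // mul1r; lra.
have uPA : u < PA.
  rewrite ltr_pdivrMr //.
  have : c / PA < n%:R by lra.
  by rewrite ltr_pdivrMr // mulrC.
have nu : n%:R * u = c by rewrite /u mulrCA divff ?mulr1 // gt_eqF.
have [a aA Pha] : exists2 a, a <= A & Phi a = u.
  have /cvgrPdist_lt /(_ u u0) /ninfty_all [M1 HM1] := PhiN.
  pose aL := minr M1 A.
  have Pa1 : Phi aL < u.
    have hm : aL <= M1 by rewrite ge_min lexx.
    by have := HM1 aL hm; rewrite sub0r normrN ger0_norm ?Phi_ge0.
  have aLA : aL <= A by rewrite ge_min lexx orbT.
  have cPhi : {within `[aL, A], continuous Phi}.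
    by apply: continuous_subspaceT; exact: Phi_cont.
  have hv : minr (Phi aL) (Phi A) <= u <= maxr (Phi aL) (Phi A).
    by rewrite ge_min le_max (ltW Pa1) (ltW uPA) orbT.
  have [a] := IVT aLA cPhi hv.
  by rewrite in_itv /= => /andP[_ aA2] Pa; exists a.
have eFZ : FZ = (fun z => fine (P (Z i0 @^-1` `]-oo, z]))).
  by apply/funext => z; rewrite -(cdfZ i0 z).
have [FZN FZP] := @gcdf_lim R _ _ P (Z i0) (mZ i0); rewrite -eFZ in FZN FZP.
have [z0 FZz0] : exists z0, FZ z0 = u.
  have /cvgrPdist_lt /(_ u u0) /ninfty_all [M2 HM2] := FZN.
  have u1' : 0 < 1 - u by rewrite subr_gt0.
  have /cvgrPdist_lt /(_ (1 - u) u1') /pinfty_all [M3 HM3] := FZP.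
  pose zL := minr M2 M3; pose zH := maxr M2 M3.
  have h1 : FZ zL < u.
    have hm : zL <= M2 by rewrite ge_min lexx.
    have := HM2 zL hm; rewrite sub0r normrN => h.
    by apply: le_lt_trans h; exact: ler_norm.
  have h2 : u < FZ zH.
    have hm : M3 <= zH by rewrite le_max lexx orbT.
    have := HM3 zH hm => h.
    have := ler_norm (1 - FZ zH); lra.
  have zLH : zL <= zH by rewrite ge_min !le_max !lexx.
  have cF : {within `[zL, zH], continuous FZ} by apply: continuous_subspaceT.
  have hv : minr (FZ zL) (FZ zH) <= u <= maxr (FZ zL) (FZ zH).
    by rewrite ge_min le_max (ltW h1) (ltW h2) orbT.
  by have [z _ Fz] := IVT zLH cF hv; exists z.
have eFX : FX = (fun z => fine (P (X i0 @^-1` `]-oo, z]))).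
  by apply/funext => z; rewrite -(cdfX i0 z).
have [FXN _] := @gcdf_lim R _ _ P (X i0) (mX i0); rewrite -eFX in FXN.
have monoFX : {homo FX : x y / x <= y} by rewrite eFX; exact: cdf_mono.
have exy : exists y, FX y < alpha.
  have /cvgrPdist_lt /(_ alpha a0) /ninfty_all [M4 HM4] := FXN.
  exists M4; have := HM4 M4 (lexx _); rewrite sub0r normrN => h.
  by apply: le_lt_trans h; exact: ler_norm.
have hq := @quantile_prop R FX alpha cX monoFX exy.
set xs := quantile FX alpha in hq *.
have mpre : forall (f : T -> R), measurable_fun setT f ->
    forall B, measurable B -> measurable (f @^-1` B).
  by move=> f mf B mB; rewrite -[X in measurable X]setTI; apply: mf.
have PZ : forall i, P (Z i @^-1` `]-oo, z0]) = u%:E.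
  move=> i; rewrite -FZz0 -(cdfZ i z0) /Defs.cdf fineK // fin_num_measure //.
  exact: mpre.
pose E0 := \bigcap_(i in [set: 'I_n]) (Z i @^-1` `]z0, +oo[ `&` X i @^-1` [set: R]).
have mE0 : measurable E0.
  apply: fin_bigcap_measurable; first exact: finite_finset.
  by move=> i _; apply: measurableI; apply: mpre.
have PE0 : P E0 = ((1 - u) ^+ n)%:E.
  rewrite /E0 (indep (fun _ => `]z0, +oo[%classic) (fun _ => [set: R])) //.
  have e1 : forall i, P (Z i @^-1` `]z0, +oo[ `&` X i @^-1` [set: R]) = (1 - u)%:E.
    move=> i; rewrite preimage_setT setIT -setCitvl -preimage_setC.
    by rewrite probability_setC ?PZ ?EFinB //; apply: mpre.
  by rewrite (eq_bigr _ (fun i _ => e1 i)) prodEFin prodr_const card_ord.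
have mXi : forall i, measurable [set w | ((X i w)%:E <= xs)%E].
  move=> i; rewrite -[X in measurable X]setTI.
  apply: (@measurable_lee _ _ _ setT) => //.
  exact/measurable_EFinP.
pose B i := Z i @^-1` `]-oo, z0] `&` ~` [set w | ((X i w)%:E <= xs)%E].
have mB : forall i, measurable (B i).
  by move=> i; apply: measurableI; [apply: mpre | apply: measurableC].
have Ka : K <= b - rho * a := hA a aA.
have PB : forall i, (P (B i) <= (u * eps)%:E)%E.
  move=> i; case: hq => [xinf|[r [xr ar]]].
    have -> : B i = set0.
      by apply/seteqP; split => w // [_ h]; apply: h; rewrite /= xinf leey.
    by rewrite measure0 lee_fin mulr_ge0 // ltW.
  have -> : B i = Z i @^-1` `]-oo, z0] `\` X i @^-1` `]-oo, r].
    apply/seteqP; split => w [h1 h2]; split => //=.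
      by move=> h3; apply: h2; rewrite /= xr lee_fin; move: h3; rewrite /= in_itv.
    by move=> h3; apply: h2; rewrite /= in_itv /=; move: h3; rewrite /= xr lee_fin.
  rewrite measureD; try exact: mpre; try by rewrite fin_num_measure ?ltry; exact: mpre.
  have hj := joint i z0 r; rewrite FZz0 -Pha in hj.
  set C := gauss_copula rho (Phi a) (FX r) in hj *.
  apply: (@le_trans _ _ ((u - C)%:E)).
    rewrite EFinB le_eqVlt; apply/orP; left; apply/eqP; congr (_ - _)%E.
      exact: PZ i.
    rewrite -hj fineK // fin_num_measure //.
    by apply: measurableI; apply: mpre.
  rewrite lee_fin -Pha.
  have r01 : 0 < rho <= 1 by rewrite r0 r1.
  have ht := @copula_tail R rho a b (FX r) r01 (le_trans (proj1 HK) Ka)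
    (le_trans hb ar : Phi b <= FX r).
  apply: le_trans ht _; rewrite ler_pM2l ?Pha //.
  exact: (proj2 HK).
  by rewrite (le_lt_trans (probability_le1 _ _)) ?ltry //; exact: mpre.
have mS := @success_meas R n d T Z X m xs mZ mX.
pose U := \big[setU/set0]_(i <- enum 'I_n) B i.
have mU : measurable U by apply: bigsetU_measurable.
have inU : forall i w, B i w -> U w.
  move=> k w Bw; rewrite /U; move: (mem_enum 'I_n k); rewrite inE => hk.
  move: hk; elim: (enum 'I_n) => [//|j s IH]; rewrite inE big_cons.
  case/predU1P => [<-|/IH h]; [by left | by right].
have sub : ~` success_event Z X m xs `<=` E0 `|` U.
  move=> w nS; apply: contrapT => H; apply: nS.
  apply: (@success_of R n d T Z X m xs z0 w m1).
    apply: contrapT => nj; apply: H; left => k _; split => //=.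
    rewrite in_itv /= andbT ltNge; apply/negP => h; apply: nj; by exists k.
  move=> k hk; apply: contrapT => nX; apply: H; right; apply: (inU k).
  by split.
have hU : (P U <= (n%:R * (u * eps))%:E)%E.
  apply: le_trans (@union_bound R d T P _ (enum 'I_n) B mB) _.
  apply: (@le_trans _ _ (\sum_(i <- enum 'I_n) (u * eps)%:E)%E).
    by apply: lee_sum => k _; exact: PB.
  by rewrite sumEFin big_enum /= sumr_const card_ord mulr_natl.
have hc : (P (~` success_event Z X m xs) <= ((1 - u) ^+ n + n%:R * (u * eps))%:E)%E.
  apply: le_trans (le_measure _ _ _ sub) _; rewrite ?inE.
  - exact: measurableC.
  - exact: measurableU.
  apply: le_trans (measureU2 _ mE0 mU) _.
  rewrite EFinD; apply: leeD; last exact: hU.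
  by rewrite le_eqVlt; apply/orP; left; apply/eqP; exact: PE0.
rewrite probability_setC // in hc.
have fS : P (success_event Z X m xs) \is a fin_num by rewrite fin_num_measure.
rewrite -(fineK fS) in hc *.
rewrite -EFinB lee_fin in hc; rewrite lee_fin.
have u01 : 0 <= u <= 1 by rewrite (ltW u0) (ltW u1).
have hb2 := @bernoulli_ub R u n u01; rewrite nu in hb2.
set q := (1 - u) ^+ n in hb2 hc *.
have q0 : 0 <= q by rewrite /q exprn_ge0 // subr_ge0 ltW.
have ecd : c * delta = 2 by rewrite /c mulrAC -mulrA divff ?mulr1 // gt_eqF.
have ece : n%:R * (u * eps) = delta / 2.
  rewrite mulrA nu /c /eps; field; rewrite gt_eqF //.
rewrite ece in hc.
have qc : q * c <= 1 by rewrite mulrDr mulr1 in hb2; lra.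
have := ler_wpM2r (ltW d0) qc; rewrite -mulrA ecd mul1r => h.
lra.
Qed.
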